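(* For $n\ge0$ define $$\mathbb{P}_\infty^{(n)}:=\int_0^\infty\left[1-\Gamma\!\left(\frac{1}{2(1-\beta)},\frac{x_0^{2(1-\beta)}}{2r(1-\beta)^2}\right)\right]\frac{y_0}{\nu r^{3/2}\sqrt{2\pi}}\sum_{k=0}^n\frac{1}{k!}\left(-\frac{y_0^2}{2\nu^2r}\right)^k\mathrm{d}r,$$ and $$b_n:=\frac{2y_0(1-\beta)}{\Gamma\!\left(\frac{1}{2(1-\beta)}\right)\nu\sqrt{\pi}x_0^{1-\beta}}\left(\frac{y_0^2(1-\beta)^2}{\nu^2x_0^{2(1-\beta)}}\right)^n\frac{\Gamma\!\left(n+1+\frac{\beta}{2-2\beta}\right)}{n!(1+2n)}.$$ Then these integrals are finite, $\mathbb{P}_\infty^{(n)}=\sum_{k=0}^n(-1)^kb_k$, and $|\mathbb{P}_\infty-\mathbb{P}_\infty^{(n)}|\le b_{n+1}$ for every $n\ge0$. In particular $$\mathbb{P}_\infty^{(0)}=\frac{2\Gamma\!\left(1+\frac{\beta}{2-2\beta}\right)}{\Gamma\!\left(\frac{1}{2-2\beta}\right)}\frac{y_0(1-\beta)}{\nu\sqrt{\pi}x_0^{1-\beta}}.$$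
   Context: Parameters $x_0,y_0,\nu>0$, $\beta\in[0,1)$. $\Gamma(v,x):=\Gamma(v)^{-1}\int_0^xu^{v-1}e^{-u}\,\mathrm{d}u$ is the normalised lower incomplete Gamma function, $\Gamma(\cdot)$ the Euler Gamma function. $\mathbb{P}_\infty:=\frac{y_0}{\nu\sqrt{2\pi}}\int_0^\infty\left[1-\Gamma\!\left(\frac{1}{2(1-\beta)},\frac{x_0^{2(1-\beta)}}{2r(1-\beta)^2}\right)\right]r^{-3/2}\exp\!\left(-\frac{y_0^2}{2\nu^2r}\right)\mathrm{d}r$, which equals the large-time limit $\lim_{t\to\infty}\mathbb{P}(X_t=0)$ of the mass at zero in the uncorrelated SABR model $\mathrm{d}X_t=Y_tX_t^\beta\mathrm{d}W_t$, $\mathrm{d}Y_t=\nu Y_t\mathrm{d}Z_t$ ($W,Z$ independent, origin absorbing). *)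

(* Defs.v *)
From Stdlib Require Import Arith Reals Lra ClassicalEpsilon.
Open Scope R_scope.

Definition improper_integral_0_inf (f : R -> R) (l : R) : Prop :=
  (forall a b, 0 < a -> a <= b -> inhabited (Riemann_integrable f a b)) /\
  (forall eps, 0 < eps -> exists delta, 0 < delta /\ exists M,
     forall a b (pr : Riemann_integrable f a b),
       0 < a -> a < delta -> M < b -> a <= b -> Rabs (RiemannInt pr - l) < eps).

Definition improper_integral_0_x (f : R -> R) (x l : R) : Prop :=
  (forall a, 0 < a -> a <= x -> inhabited (Riemann_integrable f a x)) /\
  (forall eps, 0 < eps -> exists delta, 0 < delta /\
     forall a (pr : Riemann_integrable f a x),
       0 < a -> a < delta -> a <= x -> Rabs (RiemannInt pr - l) < eps).

(* The value of a (convergent) improper integral; limits are unique, so this is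
   the integral whenever it converges. *)
Definition Int_0_inf (f : R -> R) : R :=
  epsilon (inhabits 0) (fun l => improper_integral_0_inf f l).
Definition Int_0_x (f : R -> R) (x : R) : R :=
  epsilon (inhabits 0) (fun l => improper_integral_0_x f x l).

Definition Gamma (v : R) : R :=
  Int_0_inf (fun u => Rpower u (v - 1) * exp (- u)).

Definition Gamma_inc (v x : R) : R :=
  / Gamma v * Int_0_x (fun u => Rpower u (v - 1) * exp (- u)) x.

Definition tail_factor (x0 beta r : R) : R :=
  1 - Gamma_inc (1 / (2 * (1 - beta)))
        (Rpower x0 (2 * (1 - beta)) / (2 * r * (1 - beta) ^ 2)).

Definition P_inf_integrand (x0 y0 nu beta : R) (r : R) : R :=
  y0 / (nu * sqrt (2 * PI)) * tail_factor x0 beta r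
  * Rpower r (- (3 / 2)) * exp (- (y0 ^ 2 / (2 * nu ^ 2 * r))).

Definition P_inf (x0 y0 nu beta : R) : R :=
  Int_0_inf (P_inf_integrand x0 y0 nu beta).

Definition P_n_integrand (x0 y0 nu beta : R) (n : nat) (r : R) : R :=
  tail_factor x0 beta r * (y0 / (nu * Rpower r (3 / 2) * sqrt (2 * PI)))
  * sum_f_R0 (fun k => / INR (fact k) * (- (y0 ^ 2 / (2 * nu ^ 2 * r))) ^ k) n.

Definition P_n (x0 y0 nu beta : R) (n : nat) : R :=
  Int_0_inf (P_n_integrand x0 y0 nu beta n).

Definition b_coef (x0 y0 nu beta : R) (n : nat) : R :=
  2 * y0 * (1 - beta)
  / (Gamma (1 / (2 * (1 - beta))) * nu * sqrt PI * Rpower x0 (1 - beta))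
  * (y0 ^ 2 * (1 - beta) ^ 2 / (nu ^ 2 * Rpower x0 (2 * (1 - beta)))) ^ n
  * (Gamma (INR n + 1 + beta / (2 - 2 * beta)) / (INR (fact n) * (1 + 2 * INR n))).

(* Main.v *)
Require Import Defs.
From Stdlib Require Import Arith Reals Lra ClassicalEpsilon.
From Coquelicot Require Import Coquelicot.
Open Scope R_scope.

Definition Pinf := Rbar_locally p_infty.

Lemma lim0_iff (f : R -> R) (L : R) : filterlim f (at_right 0) (locally L) <->
  forall eps, 0<eps -> exists d, 0<d /\ forall x, 0<x -> x<d -> Rabs (f x - L) < eps.
Proof.
  rewrite filterlim_locally. split.
  - intros H eps He. destruct (H (mkposreal eps He)) as [d Hd].
    exists d. split. apply cond_pos. intros x H1 H2. apply (Hd x).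
    unfold ball; simpl; unfold AbsRing_ball, abs, minus, plus, opp; simpl.
    rewrite Rabs_right by lra. lra. exact H1.
  - intros H eps. destruct (H eps (cond_pos eps)) as [d [Hd H1]].
    exists (mkposreal d Hd). intros y Hy Hy0. simpl in Hy.
    unfold ball in Hy; simpl in Hy; unfold AbsRing_ball, abs, minus, plus, opp in Hy; simpl in Hy.
    apply H1. exact Hy0. rewrite Rabs_right in Hy by lra. lra.
Qed.

Lemma limI_iff (f : R -> R) (L : R) : filterlim f Pinf (locally L) <->
  forall eps, 0<eps -> exists M, forall x, M<x -> Rabs (f x - L) < eps.
Proof.
  rewrite filterlim_locally. split.
  - intros H eps He. destruct (H (mkposreal eps He)) as [M HM].
    exists M. intros x Hx. apply (HM x Hx).
  - intros H eps. destruct (H eps (cond_pos eps)) as [M HM]. exists M. exact HM.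
Qed.

Lemma lim_plus {T} {F} {FF: Filter F} (f g : T -> R) a b :
  filterlim f F (locally a) -> filterlim g F (locally b) ->
  filterlim (fun x => f x + g x) F (locally (a+b)).
Proof. intros Hf Hg. exact (filterlim_comp_2 f g Rplus Hf Hg (filterlim_plus a b)). Qed.

Lemma lim_mult {T} {F} {FF: Filter F} (f g : T -> R) a b :
  filterlim f F (locally a) -> filterlim g F (locally b) ->
  filterlim (fun x => f x * g x) F (locally (a*b)).
Proof. intros Hf Hg. exact (filterlim_comp_2 f g Rmult Hf Hg (filterlim_mult a b)). Qed.
Lemma lim_const {T} {F} {FF: Filter F} (a : R) : filterlim (fun _ : T => a) F (locally a).
Proof. apply filterlim_const. Qed.

Lemma lim_scal {T} {F} {FF: Filter F} (f : T -> R) k a :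
  filterlim f F (locally a) -> filterlim (fun x => k * f x) F (locally (k*a)).
Proof. intros. apply lim_mult; auto. apply lim_const. Qed.

Lemma lim_minus {T} {F} {FF: Filter F} (f g : T -> R) a b :
  filterlim f F (locally a) -> filterlim g F (locally b) ->
  filterlim (fun x => f x - g x) F (locally (a-b)).
Proof. intros Hf Hg. unfold Rminus. apply lim_plus; auto.
  replace (-b) with ((-1)*b) by ring.
  apply (filterlim_ext (fun x => (-1) * g x)). intros; ring. apply lim_scal; auto. Qed.

Lemma lim_inv0 c (f : R -> R) (L : R) : 0 < c -> filterlim f Pinf (locally L) ->
  filterlim (fun r => f (c/r)) (at_right 0) (locally L).
Proof.
  intros Hc H. rewrite limI_iff in H. apply lim0_iff. intros eps He.
  destruct (H eps He) as [M HM]. exists (c / (Rabs M + 1)). split.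
  apply Rdiv_lt_0_compat; auto. pose proof (Rabs_pos M); lra.
  intros x Hx Hxd. apply HM.
  assert (Hm: 0 < Rabs M + 1) by (pose proof (Rabs_pos M); lra).
  apply Rmult_lt_compat_r with (r := x) in Hxd; auto.
  unfold Rdiv in *. replace (c * / x) with (c / x) by reflexivity.
  apply Rle_lt_trans with (Rabs M). apply Rle_abs.
  apply Rlt_le_trans with (Rabs M + 1). lra.
  apply Rmult_le_reg_r with x; auto.
  replace (c / x * x) with c by (field; lra).
  replace (c * / (Rabs M + 1) * x) with (c/(Rabs M + 1) * x) in Hxd by reflexivity.
  assert (c = (Rabs M + 1) * (c / (Rabs M + 1))) by (field; lra).
  nra.
Qed.

Lemma lim_invI c (f : R -> R) (L : R) : 0 < c -> filterlim f (at_right 0) (locally L) ->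
  filterlim (fun r => f (c/r)) Pinf (locally L).
Proof.
  intros Hc H. rewrite lim0_iff in H. apply limI_iff. intros eps He.
  destruct (H eps He) as [d [Hd Hx]]. exists (c/d). intros x Hxd.
  assert (0 < c/d) by (apply Rdiv_lt_0_compat; auto).
  apply Hx. apply Rdiv_lt_0_compat; lra.
  apply Rmult_lt_reg_r with x. lra. replace (c/x*x) with c by (field; lra).
  assert (c = c/d*d) by (field; lra). nra.
Qed.

Lemma lim_squeeze0 {T} {F} {FF: Filter F} (f g : T -> R) :
  F (fun x => 0 <= f x <= g x) -> filterlim g F (locally 0) -> filterlim f F (locally 0).
Proof.
  intros H Hg. apply (filterlim_le_le (fun _ => 0) f g (Finite 0)); auto.
  apply lim_const.
Qed.

Definition iiR (f : R -> R) (l : R) : Prop :=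
  (forall a b, 0 < a -> a <= b -> ex_RInt f a b) /\
  (forall eps, 0 < eps -> exists delta, 0 < delta /\ exists M,
     forall a b, 0 < a -> a < delta -> M < b -> a <= b -> Rabs (RInt f a b - l) < eps).

Lemma iiR_ii f l : iiR f l -> improper_integral_0_inf f l.
Proof.
  intros [H1 H2]. split.
  - intros a b Ha Hab. constructor. apply ex_RInt_Reals_0. auto.
  - intros eps He. destruct (H2 eps He) as [d [Hd [M HM]]]. exists d. split; auto.
    exists M. intros a b pr Ha Had HMb Hab. rewrite <- RInt_Reals. auto.
Qed.

Lemma ii_iiR f l : improper_integral_0_inf f l -> iiR f l.
Proof.
  intros [H1 H2]. split.
  - intros a b Ha Hab. destruct (H1 a b Ha Hab) as [pr]. apply ex_RInt_Reals_1. exact pr.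
  - intros eps He. destruct (H2 eps He) as [d [Hd [M HM]]]. exists d. split; auto.
    exists M. intros a b Ha Had HMb Hab. destruct (H1 a b Ha Hab) as [pr].
    rewrite (RInt_Reals f a b pr). auto.
Qed.

Lemma eq_of_close (l l' : R) : (forall eps, 0 < eps -> Rabs (l - l') < eps) -> l = l'.
Proof.
  intros H. destruct (Req_dec l l') as [|Hn]; auto.
  assert (0 < Rabs (l - l')) by (apply Rabs_pos_lt; lra).
  specialize (H _ H0). lra.
Qed.

Lemma iiR_unique f l l' : iiR f l -> iiR f l' -> l = l'.
Proof.
  intros [_ H] [_ H']. apply eq_of_close. intros eps He.
  destruct (H (eps/2)) as [d [Hd [M HM]]]. lra.
  destruct (H' (eps/2)) as [d' [Hd' [M' HM']]]. lra.
  set (a := Rmin d d' / 2). set (b := Rmax (Rmax M M') a + 1).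
  assert (Ha: 0 < a) by (unfold a; apply Rmin_case; lra).
  assert (Ha1: a < d) by (unfold a; pose proof (Rmin_l d d'); lra).
  assert (Ha2: a < d') by (unfold a; pose proof (Rmin_r d d'); lra).
  assert (Hb1: M < b) by (unfold b; pose proof (Rmax_l M M'); pose proof (Rmax_l (Rmax M M') a); lra).
  assert (Hb2: M' < b) by (unfold b; pose proof (Rmax_r M M'); pose proof (Rmax_l (Rmax M M') a); lra).
  assert (Hab: a <= b) by (unfold b; pose proof (Rmax_r (Rmax M M') a); lra).
  specialize (HM a b Ha Ha1 Hb1 Hab). specialize (HM' a b Ha Ha2 Hb2 Hab).
  replace (l - l') with (-(RInt f a b - l) + (RInt f a b - l')) by ring.
  eapply Rle_lt_trans. apply Rabs_triang. rewrite Rabs_Ropp. lra.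
Qed.

Lemma Int_0_inf_eq f l : iiR f l -> Int_0_inf f = l.
Proof.
  intros H. unfold Int_0_inf.
  assert (Hs := epsilon_spec (inhabits 0) (fun l => improper_integral_0_inf f l)
     (ex_intro _ l (iiR_ii f l H))).
  simpl in Hs. apply ii_iiR in Hs. eapply iiR_unique; eauto.
Qed.

Definition iixR (f : R -> R) (x l : R) : Prop :=
  (forall a, 0 < a -> a <= x -> ex_RInt f a x) /\
  (forall eps, 0 < eps -> exists delta, 0 < delta /\
     forall a, 0 < a -> a < delta -> a <= x -> Rabs (RInt f a x - l) < eps).

Lemma Int_0_x_eq f x l : 0 < x -> iixR f x l -> Int_0_x f x = l.
Proof.
  intros Hx H. unfold Int_0_x.
  assert (Hii : improper_integral_0_x f x l).
  { destruct H as [H1 H2]. split.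
    - intros a Ha Hax. constructor. apply ex_RInt_Reals_0. auto.
    - intros eps He. destruct (H2 eps He) as [d [Hd HM]]. exists d. split; auto.
      intros a pr Ha Had Hax. rewrite <- RInt_Reals. auto. }
  assert (Hs := epsilon_spec (inhabits 0) (fun l => improper_integral_0_x f x l)
     (ex_intro _ l Hii)).
  simpl in Hs. set (l' := epsilon _ _) in *. clearbody l'.
  destruct Hs as [H1 H2]. destruct H as [_ H].
  symmetry. apply eq_of_close. intros eps He.
  destruct (H (eps/2)) as [d [Hd HM]]. lra.
  destruct (H2 (eps/2)) as [d' [Hd' HM']]. lra.
  set (a := Rmin (Rmin d d') x / 2).
  assert (Ha: 0 < a) by (unfold a; repeat apply Rmin_case; lra).
  assert (Ha1: a < d) by (unfold a; pose proof (Rmin_l d d'); pose proof (Rmin_l (Rmin d d') x); lra).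
  assert (Ha2: a < d') by (unfold a; pose proof (Rmin_r d d'); pose proof (Rmin_l (Rmin d d') x); lra).
  assert (Hax: a <= x) by (unfold a; pose proof (Rmin_r (Rmin d d') x); lra).
  destruct (H1 a Ha Hax) as [pr].
  specialize (HM a Ha Ha1 Hax). specialize (HM' a pr Ha Ha2 Hax).
  rewrite <- RInt_Reals in HM'.
  replace (l - l') with (-(RInt f a x - l) + (RInt f a x - l')) by ring.
  eapply Rle_lt_trans. apply Rabs_triang. rewrite Rabs_Ropp. lra.
Qed.

Lemma iiR_ext f g l : (forall x, 0 < x -> f x = g x) -> iiR f l -> iiR g l.
Proof.
  intros E [H1 H2]. split.
  - intros a b Ha Hab. apply ex_RInt_ext with f. 2: auto.
    intros x Hx. rewrite Rmin_left in Hx by lra. apply E; lra.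
  - intros eps He. destruct (H2 eps He) as [d [Hd [M HM]]]. exists d. split; auto.
    exists M. intros a b Ha Had HMb Hab. rewrite <- (RInt_ext f). auto.
    intros x Hx. rewrite Rmin_left in Hx by lra. apply E; lra.
Qed.

Lemma iiR_plus f g l l' : iiR f l -> iiR g l' -> iiR (fun x => f x + g x) (l + l').
Proof.
  intros [H1 H2] [H1' H2']. split.
  - intros a b Ha Hab. apply (ex_RInt_plus f g); auto.
  - intros eps He. destruct (H2 (eps/2)) as [d [Hd [M HM]]]. lra.
    destruct (H2' (eps/2)) as [d' [Hd' [M' HM']]]. lra.
    exists (Rmin d d'). split. apply Rmin_case; lra. exists (Rmax M M').
    intros a b Ha Had HMb Hab.
    pose proof (Rmin_l d d'); pose proof (Rmin_r d d'); pose proof (Rmax_l M M'); pose proof (Rmax_r M M').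
    rewrite (RInt_plus f g) by auto.
    specialize (HM a b Ha ltac:(lra) ltac:(lra) Hab). specialize (HM' a b Ha ltac:(lra) ltac:(lra) Hab).
    change (plus (RInt f a b) (RInt g a b)) with (RInt f a b + RInt g a b).
    replace (RInt f a b + RInt g a b - (l + l')) with ((RInt f a b - l) + (RInt g a b - l')) by ring.
    eapply Rle_lt_trans. apply Rabs_triang. lra.
Qed.

Lemma iiR_scal f k l : iiR f l -> iiR (fun x => k * f x) (k * l).
Proof.
  intros [H1 H2]. split.
  - intros a b Ha Hab. apply (ex_RInt_scal f); auto.
  - intros eps He. destruct (H2 (eps/(Rabs k + 1))) as [d [Hd [M HM]]].
    apply Rdiv_lt_0_compat; auto. pose proof (Rabs_pos k); lra.
    exists d. split; auto. exists M. intros a b Ha Had HMb Hab.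
    rewrite (RInt_scal f) by auto.
    change (scal k (RInt f a b)) with (k * RInt f a b).
    specialize (HM a b Ha Had HMb Hab).
    replace (k * RInt f a b - k * l) with (k * (RInt f a b - l)) by ring.
    rewrite Rabs_mult. pose proof (Rabs_pos k).
    apply Rle_lt_trans with ((Rabs k + 1) * Rabs (RInt f a b - l)).
    pose proof (Rabs_pos (RInt f a b - l)); nra.
    apply Rmult_lt_reg_r with (/ (Rabs k + 1)). apply Rinv_0_lt_compat; lra.
    replace ((Rabs k + 1) * Rabs (RInt f a b - l) * / (Rabs k + 1)) with (Rabs (RInt f a b - l)) by (field; lra).
    exact HM.
Qed.

Lemma iiR_cmp f1 f2 f3 l1 l2 l3 : iiR f1 l1 -> iiR f2 l2 -> iiR f3 l3 ->
  (forall x, 0 < x -> Rabs (f1 x - f2 x) <= f3 x) -> Rabs (l1 - l2) <= l3.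
Proof.
  intros [A1 B1] [A2 B2] [A3 B3] Hle.
  apply Rnot_lt_le. intros Hlt. set (eps := (Rabs (l1 - l2) - l3) / 4).
  assert (He : 0 < eps) by (unfold eps; lra).
  destruct (B1 eps He) as [d1 [Hd1 [M1 HM1]]].
  destruct (B2 eps He) as [d2 [Hd2 [M2 HM2]]].
  destruct (B3 eps He) as [d3 [Hd3 [M3 HM3]]].
  set (a := Rmin d1 (Rmin d2 d3) / 2). set (b := Rmax M1 (Rmax M2 (Rmax M3 a)) + 1).
  pose proof (Rmin_l d1 (Rmin d2 d3)); pose proof (Rmin_r d1 (Rmin d2 d3));
  pose proof (Rmin_l d2 d3); pose proof (Rmin_r d2 d3).
  pose proof (Rmax_l M1 (Rmax M2 (Rmax M3 a))); pose proof (Rmax_r M1 (Rmax M2 (Rmax M3 a)));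
  pose proof (Rmax_l M2 (Rmax M3 a)); pose proof (Rmax_r M2 (Rmax M3 a));
  pose proof (Rmax_l M3 a); pose proof (Rmax_r M3 a).
  assert (Ha : 0 < a) by (unfold a; repeat apply Rmin_case; lra).
  assert (Hab : a <= b) by (unfold b; lra).
  specialize (HM1 a b Ha ltac:(unfold a; lra) ltac:(unfold b; lra) Hab).
  specialize (HM2 a b Ha ltac:(unfold a; lra) ltac:(unfold b; lra) Hab).
  specialize (HM3 a b Ha ltac:(unfold a; lra) ltac:(unfold b; lra) Hab).
  assert (Hm : Rabs (RInt f1 a b - RInt f2 a b) <= RInt f3 a b).
  { rewrite <- (RInt_minus f1 f2) by auto.
    eapply Rle_trans. apply abs_RInt_le. auto. apply (ex_RInt_minus f1 f2); auto.
    apply RInt_le; auto. apply ex_RInt_norm. apply (ex_RInt_minus f1 f2); auto.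
    intros x Hx. apply Hle. lra. }
  apply Rabs_def2 in HM1. apply Rabs_def2 in HM2. apply Rabs_def2 in HM3.
  apply Rabs_le_between in Hm. unfold eps in *.
  destruct (Rcase_abs (l1 - l2)); [rewrite Rabs_left in * by lra | rewrite Rabs_right in * by lra]; lra.
Qed.

Lemma RInt_antideriv (f F : R -> R) a b : 0 < a -> a <= b ->
  (forall x, 0 < x -> is_derive F x (f x)) -> (forall x, 0 < x -> continuous f x) ->
  ex_RInt f a b /\ RInt f a b = F b - F a.
Proof.
  intros Ha Hab HD HC.
  assert (H := is_RInt_derive F f a b).
  rewrite Rmin_left, Rmax_right in H by lra.
  assert (Hi : is_RInt f a b (minus (F b) (F a))).
  { apply H; intros x Hx; [apply HD | apply HC]; lra. }
  split. eexists; eauto. erewrite is_RInt_unique; [|exact Hi]. reflexivity.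
Qed.

Lemma iiR_antideriv (f F : R -> R) L0 L1 :
  (forall x, 0 < x -> is_derive F x (f x)) -> (forall x, 0 < x -> continuous f x) ->
  filterlim F (at_right 0) (locally L0) -> filterlim F Pinf (locally L1) ->
  iiR f (L1 - L0).
Proof.
  intros HD HC H0 H1. rewrite lim0_iff in H0. rewrite limI_iff in H1. split.
  - intros a b Ha Hab. apply (RInt_antideriv f F a b Ha Hab HD HC).
  - intros eps He. destruct (H0 (eps/2)) as [d [Hd Hd']]. lra.
    destruct (H1 (eps/2)) as [M HM]. lra.
    exists d. split; auto. exists M. intros a b Ha Had HMb Hab.
    rewrite (proj2 (RInt_antideriv f F a b Ha Hab HD HC)).
    specialize (Hd' a Ha Had). specialize (HM b HMb).
    apply Rabs_def2 in Hd'. apply Rabs_def2 in HM. apply Rabs_def1; lra.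
Qed.

Lemma iixR_antideriv (f F : R -> R) L0 x : 0 < x ->
  (forall x, 0 < x -> is_derive F x (f x)) -> (forall x, 0 < x -> continuous f x) ->
  filterlim F (at_right 0) (locally L0) ->
  iixR f x (F x - L0).
Proof.
  intros Hx HD HC H0. rewrite lim0_iff in H0. split.
  - intros a Ha Hab. apply (RInt_antideriv f F a x Ha Hab HD HC).
  - intros eps He. destruct (H0 eps) as [d [Hd Hd']]. lra.
    exists d. split; auto. intros a Ha Had Hab.
    rewrite (proj2 (RInt_antideriv f F a x Ha Hab HD HC)).
    specialize (Hd' a Ha Had).
    apply Rabs_def2 in Hd'. apply Rabs_def1; lra.
Qed.

Lemma mono_limI (F : R -> R) U : (forall x y, 0 < x -> x <= y -> F x <= F y) ->
  (forall x, 0 < x -> F x <= U) ->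
  exists L, filterlim F Pinf (locally L) /\ forall x, 0 < x -> F x <= L.
Proof.
  intros Hm HU.
  set (E := fun z => exists x, 0 < x /\ z = F x).
  destruct (completeness E) as [L [Hub Hlub]].
  { exists U. intros z [x [Hx ->]]. auto. }
  { exists (F 1). exists 1. split; auto; lra. }
  exists L. split.
  - apply limI_iff. intros eps He.
    assert (exists x0, 0 < x0 /\ L - eps < F x0) as [x0 [Hx0 Hlt]].
    { apply Classical_Prop.NNPP. intros Hn. assert (L <= L - eps); [|lra].
      apply Hlub. intros z [x [Hx ->]]. apply Rnot_lt_le. intros Hc. apply Hn. eauto. }
    exists x0. intros x Hx. assert (F x0 <= F x) by (apply Hm; lra).
    assert (F x <= L) by (apply Hub; exists x; split; auto; lra).
    apply Rabs_def1; lra.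
  - intros x Hx. apply Hub. exists x; auto.
Qed.

Lemma mono_lim0 (F : R -> R) D : (forall x y, 0 < x -> x <= y -> F x <= F y) ->
  (forall x, 0 < x -> D <= F x) ->
  exists L, filterlim F (at_right 0) (locally L) /\ forall x, 0 < x -> L <= F x.
Proof.
  intros Hm HD.
  set (E := fun z => exists x, 0 < x /\ z = - F x).
  destruct (completeness E) as [m [Hub Hlub]].
  { exists (-D). intros z [x [Hx ->]]. specialize (HD x Hx). lra. }
  { exists (- F 1). exists 1. split; auto; lra. }
  exists (-m). split.
  - apply lim0_iff. intros eps He.
    assert (exists x0, 0 < x0 /\ m - eps < - F x0) as [x0 [Hx0 Hlt]].
    { apply Classical_Prop.NNPP. intros Hn. assert (m <= m - eps); [|lra].
      apply Hlub. intros z [x [Hx ->]]. apply Rnot_lt_le. intros Hc. apply Hn. eauto. }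
    exists x0. split; auto. intros x Hx Hxx. assert (F x <= F x0) by (apply Hm; lra).
    assert (- F x <= m) by (apply Hub; exists x; split; auto).
    apply Rabs_def1; lra.
  - intros x Hx. assert (- F x <= m) by (apply Hub; exists x; split; auto). lra.
Qed.

Lemma lim_le_I (F : R -> R) L c : filterlim F Pinf (locally L) ->
  (forall x, c < x -> F x <= L) -> True.
Proof. auto. Qed.

Definition gf (w s : R) := Rpower s (w - 1) * exp (- s).
Definition Gf (w x : R) := RInt (gf w) 1 x.

Lemma Rpower_derive p s : 0 < s -> is_derive (fun s => Rpower s p) s (p * Rpower s (p - 1)).
Proof. intros Hs. apply is_derive_Reals. apply derivable_pt_lim_power. auto. Qed.

Lemma Rpower_cont p s : 0 < s -> continuous (fun s => Rpower s p) s.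
Proof. intros Hs. apply (ex_derive_continuous (K:=R_AbsRing) (V:=R_NormedModule)). eexists. apply Rpower_derive; auto. Qed.

Lemma Rpower_pos' x p : 0 < Rpower x p.
Proof. unfold Rpower. apply exp_pos. Qed.

Lemma gf_cont w s : 0 < s -> continuous (gf w) s.
Proof.
  intros Hs. apply (ex_derive_continuous (K:=R_AbsRing) (V:=R_NormedModule)). unfold gf. apply ex_derive_mult.
  eexists. apply Rpower_derive; auto. auto_derive. auto.
Qed.

Lemma gf_pos w s : 0 < gf w s.
Proof. unfold gf. apply Rmult_lt_0_compat. apply Rpower_pos'. apply exp_pos. Qed.

Lemma ex_RInt_pos (f : R -> R) a b : 0 < a -> 0 < b -> (forall s, 0 < s -> continuous f s) ->
  ex_RInt f a b.
Proof.
  intros Ha Hb H. apply (ex_RInt_continuous (V:=R_CompleteNormedModule)). intros z Hz. apply H.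
  destruct Hz as [Hz _]. eapply Rlt_le_trans; [|exact Hz]. apply Rmin_case; auto.
Qed.

Lemma Gf_deriv w x : 0 < x -> is_derive (Gf w) x (gf w x).
Proof.
  intros Hx. apply (is_derive_RInt (V:=R_CompleteNormedModule) (gf w) (Gf w) 1 x). 2: apply gf_cont; auto.
  exists (mkposreal (x/2) ltac:(lra)). intros y Hy. simpl in Hy.
  unfold ball in Hy; simpl in Hy; unfold AbsRing_ball, abs, minus, plus, opp in Hy; simpl in Hy.
  apply Rabs_def2 in Hy. apply RInt_correct. apply ex_RInt_pos; try lra.
  intros; apply gf_cont; auto.
Qed.

Lemma Gf_diff w x y : 0 < x -> 0 < y -> Gf w y - Gf w x = RInt (gf w) x y.
Proof.
  intros Hx Hy. unfold Gf.
  assert (H := RInt_Chasles (gf w) 1 x y).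
  change (plus (RInt (gf w) 1 x) (RInt (gf w) x y)) with (RInt (gf w) 1 x + RInt (gf w) x y) in H.
  rewrite <- H. ring. apply ex_RInt_pos; try lra; intros; apply gf_cont; auto.
  apply ex_RInt_pos; try lra; intros; apply gf_cont; auto.
Qed.

Lemma Gf_1 w : Gf w 1 = 0.
Proof. unfold Gf. rewrite RInt_point. reflexivity. Qed.

Lemma Gf_mono w x y : 0 < x -> x <= y -> Gf w x <= Gf w y.
Proof.
  intros Hx Hxy. assert (RInt (gf w) x y >= 0).
  { apply Rle_ge, RInt_ge_0; auto. apply ex_RInt_pos; try lra; intros; apply gf_cont; auto.
    intros. left. apply gf_pos. }
  rewrite <- Gf_diff in H by lra. lra.
Qed.

Lemma exp_mult_nat (n : nat) y : exp (INR n * y) = exp y ^ n.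
Proof.
  induction n. simpl. rewrite Rmult_0_l. apply exp_0.
  rewrite S_INR. replace ((INR n + 1) * y) with (INR n * y + y) by ring.
  rewrite exp_plus, IHn. simpl. ring.
Qed.

Lemma pow_le_fact_exp (N : nat) s : 0 <= s -> s ^ N <= INR (fact N) * exp s.
Proof.
  intros Hs. assert (H := exp_ge_taylor s N Hs).
  destruct N as [|n].
  - simpl. pose proof (exp_pos s). simpl in H. lra.
  - rewrite tech5 in H.
    assert (0 <= sum_f_R0 (fun k => s ^ k / INR (fact k)) n).
    { apply cond_pos_sum. intros k. apply Rmult_le_pos. apply pow_le; auto.
      left. apply Rinv_0_lt_compat, lt_0_INR, lt_O_fact. }
    assert (s ^ S n / INR (fact (S n)) <= exp s) by lra.
    assert (0 < INR (fact (S n))) by apply lt_0_INR, lt_O_fact.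
    apply Rmult_le_compat_l with (r := INR (fact (S n))) in H1; [|lra].
    replace (INR (fact (S n)) * (s ^ S n / INR (fact (S n)))) with (s ^ S n) in H1 by (field; lra).
    exact H1.
Qed.

Lemma gf_bound w : exists B, 0 <= B /\ forall s, 1 <= s -> gf w s <= B / s ^ 2.
Proof.
  destruct (INR_unbounded (Rabs w + 1)) as [N HN].
  exists (INR (fact N)). split. apply pos_INR.
  intros s Hs. unfold gf.
  assert (Hs2 : 0 < s ^ 2) by (apply pow_lt; lra).
  apply Rmult_le_reg_r with (s ^ 2); auto.
  replace (INR (fact N) / s ^ 2 * s ^ 2) with (INR (fact N)) by (field; lra).
  replace (Rpower s (w - 1) * exp (- s) * s ^ 2) with (Rpower s (w + 1) * exp (- s)).
  2:{ rewrite <- (Rpower_pow 2 s) by lra. replace (w + 1) with ((w - 1) + INR 2) by (simpl; ring).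
      rewrite Rpower_plus. ring. }
  apply Rle_trans with (s ^ N * exp (- s)).
  - apply Rmult_le_compat_r. left; apply exp_pos.
    rewrite <- Rpower_pow by lra. apply Rle_Rpower; auto. pose proof (Rle_abs w). lra.
  - pose proof (pow_le_fact_exp N s ltac:(lra)).
    rewrite exp_Ropp. apply Rmult_le_reg_r with (exp s). apply exp_pos.
    replace (s ^ N * / exp s * exp s) with (s ^ N) by (field; apply Rgt_not_eq, exp_pos). lra.
Qed.

Lemma Gf_upper w : exists U, forall x, 0 < x -> Gf w x <= U.
Proof.
  destruct (gf_bound w) as [B [HB HBs]]. exists B. intros x Hx.
  destruct (Rle_lt_dec x 1).
  - pose proof (Gf_mono w x 1 Hx r). rewrite Gf_1 in H. lra.
  - assert (HI := RInt_antideriv (fun s => B / s ^ 2) (fun s => - B / s) 1 x ltac:(lra) ltac:(lra)).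
    destruct HI as [HI1 HI2].
    + intros s Hs. auto_derive. lra. field. lra.
    + intros s Hs. apply (ex_derive_continuous (K:=R_AbsRing) (V:=R_NormedModule)). auto_derive. apply Rgt_not_eq; nra.
    + unfold Gf. apply Rle_trans with (RInt (fun s => B / s ^ 2) 1 x).
      apply RInt_le. lra. apply ex_RInt_pos; try lra. intros; apply gf_cont; auto. auto.
      intros s Hs. apply HBs. lra.
      rewrite HI2. assert (0 <= B / x) by (apply Rmult_le_pos; auto; left; apply Rinv_0_lt_compat; lra).
      replace (- B / x - - B / 1) with (B - B / x) by (field; lra). lra.
Qed.

Lemma Rpower_1_base w : Rpower 1 w = 1.
Proof. unfold Rpower. rewrite ln_1, Rmult_0_r. apply exp_0. Qed.

Lemma Gf_lower w : 0 < w -> forall x, 0 < x -> - / w <= Gf w x.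
Proof.
  intros Hw x Hx. assert (0 < / w) by (apply Rinv_0_lt_compat; auto).
  destruct (Rle_lt_dec 1 x).
  - pose proof (Gf_mono w 1 x ltac:(lra) r). rewrite Gf_1 in H0. lra.
  - pose proof (Gf_diff w x 1 Hx ltac:(lra)). rewrite Gf_1 in H0.
    assert (HI := RInt_antideriv (fun s => Rpower s (w - 1)) (fun s => Rpower s w / w) x 1 Hx ltac:(lra)).
    destruct HI as [HI1 HI2].
    + intros s Hs. apply (is_derive_ext (fun s => / w * Rpower s w)).
      intros t; unfold Rdiv; apply Rmult_comm.
      replace (Rpower s (w - 1)) with (/ w * (w * Rpower s (w - 1))) by (field; lra).
      apply is_derive_scal. apply Rpower_derive; auto.
    + intros; apply Rpower_cont; auto.
    + assert (RInt (gf w) x 1 <= RInt (fun s => Rpower s (w - 1)) x 1).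
      { apply RInt_le. lra. apply ex_RInt_pos; try lra. intros; apply gf_cont; auto. auto.
        intros s Hs. unfold gf. pose proof (Rpower_pos' s (w - 1)).
        assert (exp (- s) <= 1). { rewrite <- exp_0. left; apply exp_increasing. lra. }
        nra. }
      rewrite HI2, Rpower_1_base in H1.
      assert (0 <= Rpower x w / w) by (apply Rmult_le_pos; [left; apply Rpower_pos'|lra]).
      unfold Rdiv in *. lra.
Qed.

Definition GL0 w := epsilon (inhabits 0) (fun L => filterlim (Gf w) (at_right 0) (locally L)).
Definition GL1 w := epsilon (inhabits 0) (fun L => filterlim (Gf w) Pinf (locally L)).

Lemma GL_props w : 0 < w ->
  filterlim (Gf w) (at_right 0) (locally (GL0 w)) /\ filterlim (Gf w) Pinf (locally (GL1 w)) /\ (forall x, 0 < x -> GL0 w <= Gf w x <= GL1 w).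
Proof.
  intros Hw. destruct (Gf_upper w) as [U HU].
  destruct (mono_limI (Gf w) U) as [L1 [HL1 _]]; auto. intros; apply Gf_mono; auto.
  destruct (mono_lim0 (Gf w) (- / w)) as [L0 [HL0 _]]; auto. intros; apply Gf_mono; auto.
  intros; apply Gf_lower; auto.
  assert (H1 : filterlim (Gf w) Pinf (locally (GL1 w))).
  { unfold GL1. apply (epsilon_spec (inhabits 0) (fun L => filterlim (Gf w) Pinf (locally L))). eauto. }
  assert (H0 : filterlim (Gf w) (at_right 0) (locally (GL0 w))).
  { unfold GL0. apply (epsilon_spec (inhabits 0) (fun L => filterlim (Gf w) (at_right 0) (locally L))). eauto. }
  split; auto. split; auto. intros x Hx. split.
  - assert (Hle := filterlim_le (F := at_right 0) (Gf w) (fun _ => Gf w x) (GL0 w) (Gf w x)).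
    simpl in Hle. apply Hle; auto.
    exists (mkposreal x Hx). intros y Hy Hy0. simpl in Hy.
    unfold ball in Hy; simpl in Hy; unfold AbsRing_ball, abs, minus, plus, opp in Hy; simpl in Hy.
    apply Rabs_def2 in Hy. apply Gf_mono; lra.
    apply lim_const.
  - assert (Hle := filterlim_le (F := Pinf) (fun _ => Gf w x) (Gf w) (Gf w x) (GL1 w)).
    simpl in Hle. apply Hle; auto.
    exists x. intros y Hy. apply Gf_mono; lra.
    apply lim_const.
Qed.

Lemma Gamma_eq w : 0 < w -> Gamma w = GL1 w - GL0 w /\ 0 < GL1 w - GL0 w.
Proof.
  intros Hw. destruct (GL_props w Hw) as [H0 [H1 H2]]. split.
  - unfold Gamma. change (fun u => Rpower u (w - 1) * exp (- u)) with (gf w).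
    apply Int_0_inf_eq. apply iiR_antideriv with (Gf w); auto.
    intros; apply Gf_deriv; auto. intros; apply gf_cont; auto.
  - assert (0 < RInt (gf w) 1 2).
    { apply RInt_gt_0. lra. intros; apply gf_pos. intros; apply gf_cont; lra. }
    rewrite <- Gf_diff in H by lra. rewrite Gf_1 in H.
    destruct (H2 1 ltac:(lra)). destruct (H2 2 ltac:(lra)). rewrite Gf_1 in *. lra.
Qed.

Lemma Gamma_inc_eq v x : 0 < v -> 0 < x ->
  Gamma_inc v x = (Gf v x - GL0 v) / (GL1 v - GL0 v).
Proof.
  intros Hv Hx. unfold Gamma_inc. destruct (Gamma_eq v Hv) as [-> Hp].
  change (fun u => Rpower u (v - 1) * exp (- u)) with (gf v).
  destruct (GL_props v Hv) as [H0 _].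
  rewrite (Int_0_x_eq (gf v) x (Gf v x - GL0 v)); auto.
  unfold Rdiv; ring.
  apply iixR_antideriv; auto. intros; apply Gf_deriv; auto. intros; apply gf_cont; auto.
Qed.

Lemma lim_eq {T} {F} (f : T -> R) (a b : R) : filterlim f F (locally a) -> a = b -> filterlim f F (locally b).
Proof. intros H ->. auto. Qed.

Lemma at_right0_all (P : R -> Prop) : (forall x, 0 < x -> P x) -> at_right 0 P.
Proof. intros H. exists (mkposreal 1 Rlt_0_1). intros y _ Hy. auto. Qed.

Lemma Pinf_all (P : R -> Prop) : (forall x, 0 < x -> P x) -> Pinf P.
Proof. intros H. exists 0. intros y Hy. auto. Qed.

Lemma Rpower_div_base c r m : 0 < c -> 0 < r -> Rpower (c / r) m = Rpower c m * Rpower r (- m).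
Proof.
  intros Hc Hr. unfold Rpower. rewrite ln_div by auto. rewrite <- exp_plus. f_equal. ring.
Qed.

Lemma Rpower_inv_mul c m : Rpower c (- m) * Rpower c m = 1.
Proof. unfold Rpower. rewrite <- exp_plus. replace (- m * ln c + m * ln c) with 0 by ring. apply exp_0. Qed.

Lemma gf_shift v m x : gf (v + m) x = gf v x * Rpower x m.
Proof. unfold gf. replace (v + m - 1) with ((v - 1) + m) by ring. rewrite Rpower_plus. ring. Qed.

Lemma Rpower_lim0 m : 0 < m -> filterlim (fun r => Rpower r (- m)) Pinf (locally 0).
Proof.
  intros Hm. apply limI_iff. intros eps He. exists (exp (- ln eps / m)). intros x Hx.
  assert (Hx0 : 0 < x) by (pose proof (exp_pos (- ln eps / m)); lra).
  rewrite Rminus_0_r. rewrite Rabs_right by (left; apply Rpower_pos').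
  unfold Rpower. rewrite <- (exp_ln eps) by auto. apply exp_increasing.
  apply ln_increasing in Hx. rewrite ln_exp in Hx.
  apply Rmult_lt_compat_l with (r := m) in Hx; auto.
  replace (m * (- ln eps / m)) with (- ln eps) in Hx by (field; lra). lra.
  apply exp_pos.
Qed.

Section Tail.
Variables (v c : R).
Hypotheses (Hv : 0 < v) (Hc : 0 < c).

Definition Gam := GL1 v - GL0 v.
Definition Tf (r : R) := (GL1 v - Gf v (c / r)) / Gam.

Lemma Gam_pos : 0 < Gam.
Proof. apply (Gamma_eq v Hv). Qed.

Lemma Tf_nonneg r : 0 < r -> 0 <= Tf r.
Proof.
  intros Hr. unfold Tf. pose proof Gam_pos. apply Rmult_le_pos.
  destruct (GL_props v Hv) as [_ [_ H3]]. destruct (H3 (c/r)). apply Rdiv_lt_0_compat; auto. lra.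
  left; apply Rinv_0_lt_compat; auto.
Qed.

Lemma Gfc_deriv w r : 0 < r -> is_derive (fun r => Gf w (c / r)) r (gf w (c / r) * (- c / r ^ 2)).
Proof.
  intros Hr. assert (H := is_derive_comp (Gf w) (fun r => c / r) r (gf w (c/r)) (- c / r ^ 2)).
  rewrite Rmult_comm. apply H. apply Gf_deriv. apply Rdiv_lt_0_compat; auto.
  auto_derive. lra. field. lra.
Qed.

Lemma Tf_deriv r : 0 < r -> is_derive Tf r (gf v (c / r) * c / r ^ 2 / Gam).
Proof.
  intros Hr. unfold Tf. apply (is_derive_ext (fun r => / Gam * (GL1 v - Gf v (c / r)))).
  intros t. unfold Rdiv; apply Rmult_comm.
  replace (gf v (c / r) * c / r ^ 2 / Gam) with (/ Gam * (0 - gf v (c / r) * (- c / r ^ 2))).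
  2:{ pose proof Gam_pos. field. split; lra. }
  apply is_derive_scal. apply (is_derive_minus (fun _ => GL1 v) (fun r => Gf v (c / r))).
  auto_derive; auto. apply Gfc_deriv; auto.
Qed.

Lemma Tf_ex_derive r : 0 < r -> ex_derive Tf r.
Proof. intros; eexists; apply Tf_deriv; auto. Qed.

Lemma Tf_limI : filterlim Tf Pinf (locally 1).
Proof.
  destruct (GL_props v Hv) as [H0 _].
  assert (H := lim_invI c (Gf v) (GL0 v) Hc H0).
  unfold Tf. apply lim_eq with ((GL1 v - GL0 v) / Gam).
  apply (filterlim_ext (fun r => / Gam * (GL1 v - Gf v (c / r)))). intros; unfold Rdiv; apply Rmult_comm.
  replace ((GL1 v - GL0 v) / Gam) with (/ Gam * (GL1 v - GL0 v)) by (unfold Rdiv; ring).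
  apply lim_scal. apply lim_minus; auto. apply lim_const.
  pose proof Gam_pos as HG. unfold Rdiv. rewrite Rinv_r; auto. unfold Gam in *. lra.
Qed.

Lemma tail_cmp m x : 0 <= m -> 0 < x ->
  Rpower x m * (GL1 v - Gf v x) <= GL1 (v + m) - Gf (v + m) x.
Proof.
  intros Hm Hx. assert (Hw : 0 < v + m) by lra.
  destruct (GL_props v Hv) as [_ [H1 _]]. destruct (GL_props (v+m) Hw) as [_ [H1' _]].
  assert (Hle := filterlim_le (F := Pinf) (fun y => Rpower x m * (Gf v y - Gf v x))
                  (fun y => Gf (v + m) y - Gf (v + m) x)
                  (Rpower x m * (GL1 v - Gf v x)) (GL1 (v + m) - Gf (v + m) x)).
  simpl in Hle. apply Hle.
  - exists x. intros y Hy. rewrite !Gf_diff by lra.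
    rewrite <- (RInt_scal (V:=R_CompleteNormedModule)).
    apply RInt_le. lra. apply (ex_RInt_scal (V:=R_CompleteNormedModule)).
    apply ex_RInt_pos; try lra; intros; apply gf_cont; auto.
    apply ex_RInt_pos; try lra; intros; apply gf_cont; auto.
    intros s Hs. change (scal (Rpower x m) (gf v s)) with (Rpower x m * gf v s).
    rewrite gf_shift. rewrite Rmult_comm. apply Rmult_le_compat_l. left; apply gf_pos.
    apply Rle_Rpower_l; auto. lra.
    apply ex_RInt_pos; try lra; intros; apply gf_cont; auto.
  - apply lim_scal. apply lim_minus; auto. apply lim_const.
  - apply lim_minus; auto. apply lim_const.
Qed.
End Tail.

Section Term.
Variables (v c m : R).
Hypotheses (Hv : 0 < v) (Hc : 0 < c) (Hm : 0 < m).

Definition Af (r : R) := / m * (- Tf v c r * Rpower r (- m) - Rpower c (- m) * Gf (v + m) (c / r) / Gam v).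

Lemma Af_deriv r : 0 < r -> is_derive Af r (Tf v c r * Rpower r (- m - 1)).
Proof.
  intros Hr. pose proof (Gam_pos v Hv) as HG.
  assert (HD1 := Tf_deriv v c Hv Hc r Hr).
  assert (HD2 := Rpower_derive (- m) r Hr).
  assert (HD3 := Gfc_deriv c Hc (v + m) r Hr).
  assert (HP := is_derive_mult (Tf v c) (fun s => Rpower s (- m)) r _ _ HD1 HD2 Rmult_comm).
  assert (HS := is_derive_plus _ _ r _ _ (is_derive_scal _ r (-1) _ HP)
                  (is_derive_scal _ r (- (Rpower c (- m) / Gam v)) _ HD3)).
  unfold Af. 
  match type of HS with is_derive _ _ ?D => replace (Tf v c r * Rpower r (- m - 1)) with (/ m * D) end.
  apply is_derive_scal.
  apply (is_derive_ext _ _ r _ (fun t => eq_refl _)) in HS. revert HS. apply is_derive_ext.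
  { intros t. match goal with |- ?a = ?b => change (@eq R a b) end. unfold plus, mult; simpl. unfold Rdiv. ring. }
  unfold plus, mult; simpl.
  assert (E1 : Rpower r (- m) = Rpower r (- m - 1) * r).
  { replace (- m) with ((- m - 1) + 1) at 1 by ring. rewrite Rpower_plus, Rpower_1; auto. }
  assert (E2 : gf (v + m) (c / r) = gf v (c / r) * (Rpower c m * Rpower r (- m))).
  { rewrite gf_shift, Rpower_div_base; auto. }
  rewrite E2, E1, Rpower_Ropp with (x := c).
  pose proof (Rpower_pos' c m). field. repeat split; lra.
Qed.
End Term.

Section Term2.
Variables (v c m : R).
Hypotheses (Hv : 0 < v) (Hc : 0 < c) (Hm : 0 < m).

Lemma Af_ext : forall r, Af v c m r = / m * ((-1) * (Tf v c r * Rpower r (- m)) - (Rpower c (- m) / Gam v) * Gf (v + m) (c / r)).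
Proof. intros r. unfold Af, Rdiv. ring. Qed.

Lemma Af_limI : filterlim (Af v c m) Pinf (locally (/ m * (- (Rpower c (- m) / Gam v) * GL0 (v + m)))).
Proof.
  assert (Hw : 0 < v + m) by lra.
  destruct (GL_props (v + m) Hw) as [H0 _].
  apply (filterlim_ext (fun r => / m * ((-1) * (Tf v c r * Rpower r (- m)) - (Rpower c (- m) / Gam v) * Gf (v + m) (c / r)))).
  intros; symmetry; apply Af_ext.
  apply lim_eq with (/ m * ((-1) * (1 * 0) - (Rpower c (- m) / Gam v) * GL0 (v + m))).
  apply lim_scal. apply lim_minus. apply lim_scal. apply lim_mult.
  apply Tf_limI; auto. apply Rpower_lim0; auto.
  apply lim_scal. apply lim_invI; auto. ring.
Qed.

Lemma TR_lim0 : filterlim (fun r => Tf v c r * Rpower r (- m)) (at_right 0) (locally 0).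
Proof.
  assert (Hw : 0 < v + m) by lra. pose proof (Gam_pos v Hv) as HG.
  destruct (GL_props (v + m) Hw) as [_ [H1 _]].
  apply (lim_squeeze0 _ (fun r => Rpower c (- m) / Gam v * (GL1 (v + m) - Gf (v + m) (c / r)))).
  - apply at_right0_all. intros r Hr. split.
    apply Rmult_le_pos. apply Tf_nonneg; auto. left; apply Rpower_pos'.
    assert (Hx : 0 < c / r) by (apply Rdiv_lt_0_compat; auto).
    pose proof (tail_cmp v Hv m (c / r) ltac:(lra) Hx) as Ht.
    rewrite Rpower_div_base in Ht by auto.
    unfold Tf. replace ((GL1 v - Gf v (c / r)) / Gam v * Rpower r (- m)) with
      (Rpower c (- m) / Gam v * (Rpower c m * Rpower r (- m) * (GL1 v - Gf v (c / r)))).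
    apply Rmult_le_compat_l; auto. apply Rmult_le_pos. left; apply Rpower_pos'. left; apply Rinv_0_lt_compat; auto.
    rewrite Rpower_Ropp. pose proof (Rpower_pos' c m). field. lra.
  - apply lim_eq with (Rpower c (- m) / Gam v * (GL1 (v + m) - GL1 (v + m))).
    apply lim_scal. apply lim_minus. apply lim_const. apply lim_inv0; auto. ring.
Qed.

Lemma Af_lim0 : filterlim (Af v c m) (at_right 0) (locally (/ m * (- (Rpower c (- m) / Gam v) * GL1 (v + m)))).
Proof.
  assert (Hw : 0 < v + m) by lra.
  destruct (GL_props (v + m) Hw) as [_ [H1 _]].
  apply (filterlim_ext (fun r => / m * ((-1) * (Tf v c r * Rpower r (- m)) - (Rpower c (- m) / Gam v) * Gf (v + m) (c / r)))).
  intros; symmetry; apply Af_ext.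
  apply lim_eq with (/ m * ((-1) * 0 - (Rpower c (- m) / Gam v) * GL1 (v + m))).
  apply lim_scal. apply lim_minus. apply lim_scal. apply TR_lim0.
  apply lim_scal. apply lim_inv0; auto. ring.
Qed.

Lemma TRm_cont r : 0 < r -> continuous (fun r => Tf v c r * Rpower r (- m - 1)) r.
Proof.
  intros Hr. apply (ex_derive_continuous (K:=R_AbsRing) (V:=R_NormedModule)).
  apply ex_derive_mult. apply Tf_ex_derive; auto. eexists; apply Rpower_derive; auto.
Qed.

Lemma term_ii : iiR (fun r => Tf v c r * Rpower r (- m - 1)) (Rpower c (- m) * Gamma (v + m) / (m * Gamma v)).
Proof.
  assert (Hw : 0 < v + m) by lra. pose proof (Gam_pos v Hv) as HG.
  destruct (Gamma_eq (v + m) Hw) as [E1 _]. destruct (Gamma_eq v Hv) as [E2 _].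
  rewrite E1, E2. fold (Gam v).
  replace (Rpower c (- m) * (GL1 (v + m) - GL0 (v + m)) / (m * Gam v)) with
   (/ m * (- (Rpower c (- m) / Gam v) * GL0 (v + m)) - / m * (- (Rpower c (- m) / Gam v) * GL1 (v + m)))
   by (field; lra).
  apply iiR_antideriv with (Af v c m).
  intros; apply Af_deriv; auto. intros; apply TRm_cont; auto.
  apply Af_lim0. apply Af_limI.
Qed.
End Term2.

Lemma expm_derive_n m t : is_derive_n (fun y => exp (- y)) m t ((-1) ^ m * exp (- t)).
Proof.
  apply is_derive_n_comp_opp. 2: apply is_derive_n_exp.
  exists (mkposreal 1 Rlt_0_1). intros y _ k _. destruct k. exact I.
  eexists. apply (is_derive_n_exp (S k) y).
Qed.

Lemma expm_ex_derive_n k t : ex_derive_n (fun y => exp (- y)) k t.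
Proof. destruct k. exact I. eexists. apply (expm_derive_n (S k) t). Qed.

Lemma taylor_expm n x : 0 <= x ->
  Rabs (exp (- x) - sum_f_R0 (fun k => / INR (fact k) * (- x) ^ k) n) <= x ^ (S n) / INR (fact (S n)).
Proof.
  intros Hx. destruct Hx as [Hx | <-].
  - destruct (Taylor_Lagrange (fun y => exp (- y)) n 0 x Hx) as [z [Hz E]].
    { intros; apply expm_ex_derive_n. }
    rewrite E.
    rewrite (is_derive_n_unique _ _ _ _ (expm_derive_n (S n) z)).
    replace (sum_f_R0 (fun m => (x - 0) ^ m / INR (fact m) * Derive_n (fun y => exp (- y)) m 0) n)
      with (sum_f_R0 (fun k => / INR (fact k) * (- x) ^ k) n).
    2:{ apply sum_eq. intros i _. rewrite (is_derive_n_unique _ _ _ _ (expm_derive_n i 0)).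
        rewrite Ropp_0, exp_0. replace (- x) with ((-1) * x) by ring. rewrite Rpow_mult_distr.
        unfold Rdiv. rewrite Rminus_0_r. ring. }
    match goal with |- Rabs (?A + ?B - ?A) <= _ => replace (A + B - A) with B by ring end.
    rewrite Rminus_0_r. rewrite Rabs_mult, Rabs_mult, pow_1_abs, Rmult_1_l.
    rewrite (Rabs_right (exp (- z))) by (left; apply exp_pos).
    rewrite Rabs_right.
    2:{ apply Rle_ge, Rmult_le_pos. apply pow_le; lra. left; apply Rinv_0_lt_compat, lt_0_INR, lt_O_fact. }
    assert (exp (- z) <= 1) by (rewrite <- exp_0; left; apply exp_increasing; lra).
    assert (0 <= x ^ S n / INR (fact (S n))).
    { apply Rmult_le_pos. apply pow_le; lra. left; apply Rinv_0_lt_compat, lt_0_INR, lt_O_fact. }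
    nra.
  - rewrite Ropp_0, exp_0. 
    replace (sum_f_R0 (fun k => / INR (fact k) * 0 ^ k) n) with 1.
    rewrite Rminus_eq_0, Rabs_R0. simpl. rewrite Rmult_0_l. unfold Rdiv; rewrite Rmult_0_l; lra.
    induction n. simpl. field. rewrite tech5, <- IHn. simpl. ring.
Qed.

Lemma RIntF_deriv (f : R -> R) x : (forall s, 0 < s -> continuous f s) -> 0 < x ->
  is_derive (fun x => RInt f 1 x) x (f x).
Proof.
  intros Hf Hx. apply (is_derive_RInt (V:=R_CompleteNormedModule) f (fun x => RInt f 1 x) 1 x). 2: auto.
  exists (mkposreal (x/2) ltac:(lra)). intros y Hy. simpl in Hy.
  unfold ball in Hy; simpl in Hy; unfold AbsRing_ball, abs, minus, plus, opp in Hy; simpl in Hy.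
  apply Rabs_def2 in Hy. apply RInt_correct. apply ex_RInt_pos; try lra. auto.
Qed.

Lemma RIntF_diff (f : R -> R) x y : (forall s, 0 < s -> continuous f s) -> 0 < x -> 0 < y ->
  RInt f 1 y - RInt f 1 x = RInt f x y.
Proof.
  intros Hf Hx Hy.
  assert (H := RInt_Chasles f 1 x y).
  change (plus (RInt f 1 x) (RInt f x y)) with (RInt f 1 x + RInt f x y) in H.
  rewrite <- H. ring. apply ex_RInt_pos; try lra; auto. apply ex_RInt_pos; try lra; auto.
Qed.

Lemma iiR_bound f l : iiR f l -> (forall x, 0 < x -> 0 <= f x) ->
  forall a b, 0 < a -> a <= b -> RInt f a b <= l.
Proof.
  intros [H1 H2] Hpos a b Ha Hab. apply Rnot_lt_le. intros Hlt.
  destruct (H2 (RInt f a b - l)) as [d [Hd [M HM]]]. lra.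
  set (a' := Rmin a (d / 2)). set (b' := Rmax b (M + 1)).
  assert (Ha' : 0 < a') by (unfold a'; apply Rmin_case; lra).
  assert (Ha'1 : a' <= a) by apply Rmin_l. assert (Ha'2 : a' <= d/2) by apply Rmin_r.
  assert (Hb'1 : b <= b') by apply Rmax_l. assert (Hb'2 : M + 1 <= b') by apply Rmax_r.
  specialize (HM a' b' Ha' ltac:(lra) ltac:(lra) ltac:(lra)).
  assert (E : RInt f a' b' = RInt f a' a + RInt f a b + RInt f b b').
  { assert (C1 := RInt_Chasles f a' a b' (H1 a' a Ha' Ha'1) (H1 a b' Ha ltac:(lra))).
    assert (C2 := RInt_Chasles f a b b' (H1 a b Ha Hab) (H1 b b' ltac:(lra) Hb'1)).
    change (plus (RInt f a' a) (RInt f a b')) with (RInt f a' a + RInt f a b') in C1.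
    change (plus (RInt f a b) (RInt f b b')) with (RInt f a b + RInt f b b') in C2.
    rewrite <- C1, <- C2. match goal with |- ?a = ?b => change (@eq R a b) end. ring. }
  assert (0 <= RInt f a' a) by (apply RInt_ge_0; [lra | apply H1; lra | intros; apply Hpos; lra]).
  assert (0 <= RInt f b b') by (apply RInt_ge_0; [lra | apply H1; lra | intros; apply Hpos; lra]).
  apply Rabs_def2 in HM. lra.
Qed.

Lemma iiR_sum (f : nat -> R -> R) (l : nat -> R) n :
  (forall k, iiR (f k) (l k)) -> iiR (fun r => sum_f_R0 (fun k => f k r) n) (sum_f_R0 l n).
Proof.
  intros H. induction n.
  - simpl. apply H.
  - simpl. apply iiR_plus; auto.
Qed.

Lemma Rpower_mk r k : 0 < r -> Rpower r (- (INR k + 1 / 2) - 1) = (/ r) ^ k * Rpower r (- (3 / 2)).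
Proof.
  intros Hr. replace (- (INR k + 1 / 2) - 1) with (- INR k + - (3 / 2)) by field.
  rewrite Rpower_plus, Rpower_Ropp, Rpower_pow by auto. rewrite pow_inv. reflexivity.
Qed.

Section Main.
Variables x0 y0 nu beta : R.
Hypotheses (hx0 : 0 < x0) (hy0 : 0 < y0) (hnu : 0 < nu) (hb0 : 0 <= beta) (hb1 : beta < 1).

Definition vv := 1 / (2 * (1 - beta)).
Definition cc := Rpower x0 (2 * (1 - beta)) / (2 * (1 - beta) ^ 2).
Definition aa := y0 ^ 2 / (2 * nu ^ 2).
Definition KK := y0 / (nu * sqrt (2 * PI)).
Definition mk (k : nat) := INR k + 1 / 2.
Definition tv (k : nat) := Rpower cc (- mk k) * Gamma (vv + mk k) / (mk k * Gamma vv).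

Lemma vv_pos : 0 < vv.
Proof. unfold vv. apply Rdiv_lt_0_compat; lra. Qed.
Lemma cc_pos : 0 < cc.
Proof. unfold cc. apply Rdiv_lt_0_compat. apply Rpower_pos'. assert (0 < (1 - beta) ^ 2) by (apply pow_lt; lra). lra. Qed.
Lemma aa_pos : 0 < aa.
Proof. unfold aa. apply Rdiv_lt_0_compat. apply pow_lt; lra. assert (0 < nu ^ 2) by (apply pow_lt; lra). lra. Qed.
Lemma KK_pos : 0 < KK.
Proof. unfold KK. apply Rdiv_lt_0_compat; auto. apply Rmult_lt_0_compat; auto. apply sqrt_lt_R0. pose proof PI_RGT_0. lra. Qed.
Lemma mk_pos k : 0 < mk k.
Proof. unfold mk. pose proof (pos_INR k). lra. Qed.

Lemma tail_eq r : 0 < r -> tail_factor x0 beta r = Tf vv cc r.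
Proof.
  intros Hr. unfold tail_factor. fold vv.
  replace (Rpower x0 (2 * (1 - beta)) / (2 * r * (1 - beta) ^ 2)) with (cc / r).
  2:{ unfold cc. field. lra. }
  rewrite Gamma_inc_eq. 2: apply vv_pos. 2: apply Rdiv_lt_0_compat; auto; apply cc_pos.
  unfold Tf, Gam. pose proof (Gam_pos vv vv_pos). unfold Gam in H. field. lra.
Qed.

Lemma Pn_ext n r : 0 < r -> P_n_integrand x0 y0 nu beta n r =
  sum_f_R0 (fun k => KK * (- aa) ^ k / INR (fact k) * (Tf vv cc r * Rpower r (- mk k - 1))) n.
Proof.
  intros Hr. unfold P_n_integrand. rewrite tail_eq by auto.
  rewrite scal_sum. apply sum_eq. intros k _. unfold mk. rewrite Rpower_mk by auto.
  replace (- (y0 ^ 2 / (2 * nu ^ 2 * r))) with ((- aa) * / r) by (unfold aa; field; split; lra).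
  rewrite Rpow_mult_distr. unfold KK. rewrite Rpower_Ropp.
  pose proof (Rpower_pos' r (3/2)). assert (0 < sqrt (2 * PI)) by (apply sqrt_lt_R0; pose proof PI_RGT_0; lra).
  assert (0 < INR (fact k)) by apply lt_0_INR, lt_O_fact.
  field. repeat split; lra.
Qed.

Lemma Pn_ii n : iiR (P_n_integrand x0 y0 nu beta n) (sum_f_R0 (fun k => KK * (- aa) ^ k / INR (fact k) * tv k) n).
Proof.
  apply iiR_ext with (fun r => sum_f_R0 (fun k => KK * (- aa) ^ k / INR (fact k) * (Tf vv cc r * Rpower r (- mk k - 1))) n).
  intros; symmetry; apply Pn_ext; auto.
  apply (iiR_sum (fun k r => KK * (- aa) ^ k / INR (fact k) * (Tf vv cc r * Rpower r (- mk k - 1)))).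
  intros k. apply iiR_scal. apply term_ii. apply vv_pos. apply cc_pos. apply mk_pos.
Qed.

Lemma sqrt_cc : sqrt cc = Rpower x0 (1 - beta) / (sqrt 2 * (1 - beta)).
Proof.
  assert (Hp := Rpower_pos' x0 (1 - beta)). assert (Hs2 : 0 < sqrt 2) by (apply sqrt_lt_R0; lra).
  assert (E : cc = (Rpower x0 (1 - beta) / (sqrt 2 * (1 - beta))) * (Rpower x0 (1 - beta) / (sqrt 2 * (1 - beta)))).
  { unfold cc. replace (2 * (1 - beta)) with ((1 - beta) + (1 - beta)) by ring. rewrite Rpower_plus.
    assert (H2 : sqrt 2 * sqrt 2 = 2) by (apply sqrt_sqrt; lra).
    replace (2 * (1 - beta) ^ 2) with ((sqrt 2 * (1 - beta)) * (sqrt 2 * (1 - beta))).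
    field. lra. transitivity ((sqrt 2 * sqrt 2) * (1 - beta) ^ 2). ring. rewrite H2. reflexivity. }
  rewrite E. apply sqrt_square. left. apply Rdiv_lt_0_compat; auto. apply Rmult_lt_0_compat; lra.
Qed.

Lemma coef_eq k : KK * aa ^ k / INR (fact k) * tv k = b_coef x0 y0 nu beta k.
Proof.
  unfold tv, b_coef. fold vv.
  replace (vv + mk k) with (INR k + 1 + beta / (2 - 2 * beta)) by (unfold vv, mk; field; lra).
  assert (Hc := cc_pos). assert (Hp := Rpower_pos' x0 (1 - beta)).
  assert (Hs2 : 0 < sqrt 2) by (apply sqrt_lt_R0; lra).
  assert (HsP : 0 < sqrt PI) by (apply sqrt_lt_R0; apply PI_RGT_0).
  assert (Hg : 0 < Gamma vv) by (destruct (Gamma_eq vv vv_pos) as [-> H]; auto).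
  assert (Hf : 0 < INR (fact k)) by apply lt_0_INR, lt_O_fact.
  assert (Hk := pos_INR k).
  unfold mk. replace (- (INR k + 1 / 2)) with (- INR k + - (/ 2)) by field.
  rewrite Rpower_plus, Rpower_Ropp, Rpower_pow, (Rpower_Ropp cc), Rpower_sqrt, sqrt_cc by auto.
  rewrite <- pow_inv.
  replace (aa ^ k) with ((y0 ^ 2 * (1 - beta) ^ 2 / (nu ^ 2 * Rpower x0 (2 * (1 - beta)))) ^ k * cc ^ k).
  2:{ rewrite <- Rpow_mult_distr. f_equal. unfold cc, aa. field. repeat split; try lra.
      apply Rgt_not_eq, Rpower_pos'. }
  rewrite pow_inv. unfold KK. rewrite sqrt_mult by (try lra; left; apply PI_RGT_0).
  assert (0 < cc ^ k) by (apply pow_lt; auto).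
  field. repeat split; try lra.
Qed.

Lemma coef_eq_signed k : KK * (- aa) ^ k / INR (fact k) * tv k = (-1) ^ k * b_coef x0 y0 nu beta k.
Proof.
  rewrite <- coef_eq. replace (- aa) with ((-1) * aa) by ring. rewrite Rpow_mult_distr.
  unfold Rdiv. ring.
Qed.

Definition fI (r : R) := KK * Tf vv cc r * Rpower r (- (3 / 2)) * exp (- (y0 ^ 2 / (2 * nu ^ 2 * r))).
Definition f0 (r : R) := KK * (Tf vv cc r * Rpower r (- mk 0 - 1)).

Lemma fI_cont r : 0 < r -> continuous fI r.
Proof.
  intros Hr. apply (ex_derive_continuous (K:=R_AbsRing) (V:=R_NormedModule)). unfold fI.
  assert (0 < nu ^ 2) by (apply pow_lt; lra).
  apply ex_derive_mult. apply ex_derive_mult. apply ex_derive_mult.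
  auto_derive; auto. apply Tf_ex_derive; auto. apply vv_pos. apply cc_pos.
  eexists; apply Rpower_derive; auto.
  auto_derive. apply Rgt_not_eq. nra.
Qed.

Lemma f0_eq r : f0 r = KK * Tf vv cc r * Rpower r (- (3 / 2)).
Proof. unfold f0, mk. simpl INR. replace (- (0 + 1 / 2) - 1) with (- (3 / 2)) by field. ring. Qed.

Lemma fI_le r : 0 < r -> 0 <= fI r <= f0 r.
Proof.
  intros Hr. rewrite f0_eq. unfold fI.
  assert (0 <= KK * Tf vv cc r * Rpower r (- (3 / 2))).
  { apply Rmult_le_pos. apply Rmult_le_pos. left; apply KK_pos. apply Tf_nonneg; auto. apply vv_pos. apply cc_pos.
    left; apply Rpower_pos'. }
  assert (0 < y0 ^ 2 / (2 * nu ^ 2 * r)).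
  { apply Rdiv_lt_0_compat. apply pow_lt; lra. assert (0 < nu ^ 2) by (apply pow_lt; lra). nra. }
  assert (exp (- (y0 ^ 2 / (2 * nu ^ 2 * r))) <= 1) by (rewrite <- exp_0; left; apply exp_increasing; lra).
  pose proof (exp_pos (- (y0 ^ 2 / (2 * nu ^ 2 * r)))).
  split. apply Rmult_le_pos; lra. nra.
Qed.

Lemma fI_ii : exists L, iiR fI L.
Proof.
  assert (H0 : iiR f0 (KK * tv 0)).
  { apply (iiR_scal (fun r => Tf vv cc r * Rpower r (- mk 0 - 1))). apply term_ii. apply vv_pos. apply cc_pos. apply mk_pos. }
  assert (Hf0 : forall x, 0 < x -> 0 <= f0 x) by (intros x Hx; destruct (fI_le x Hx); lra).
  assert (Hl0 : 0 <= KK * tv 0).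
  { pose proof (iiR_bound _ _ H0 Hf0 1 1 ltac:(lra) ltac:(lra)). rewrite RInt_point in H. exact H. }
  assert (Hc : forall s, 0 < s -> continuous fI s) by (intros; apply fI_cont; auto).
  assert (Hc0 : forall s, 0 < s -> continuous f0 s).
  { intros s Hs. unfold f0. apply (ex_derive_continuous (K:=R_AbsRing) (V:=R_NormedModule)).
    apply ex_derive_mult. auto_derive; auto. apply ex_derive_mult. apply Tf_ex_derive; auto.
    apply vv_pos. apply cc_pos. eexists; apply Rpower_derive; auto. }
  set (F := fun x => RInt fI 1 x).
  assert (Hm : forall x y, 0 < x -> x <= y -> F x <= F y).
  { intros x y Hx Hxy. unfold F. assert (H := RIntF_diff fI x y Hc Hx ltac:(lra)).
    assert (0 <= RInt fI x y).
    { apply RInt_ge_0; [lra | apply ex_RInt_pos; auto; lra | intros t Ht; destruct (fI_le t ltac:(lra)); auto]. }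
    lra. }
  assert (HF1 : F 1 = 0) by (unfold F; rewrite RInt_point; reflexivity).
  destruct (mono_limI F (KK * tv 0)) as [L1 [HL1 _]]; auto.
  { intros x Hx. destruct (Rle_lt_dec 1 x).
    - unfold F. apply Rle_trans with (RInt f0 1 x). apply RInt_le; [lra | apply ex_RInt_pos; auto; lra |
        apply ex_RInt_pos; auto; lra | intros t Ht; destruct (fI_le t ltac:(lra)); eauto].
      apply iiR_bound; auto; lra.
    - pose proof (Hm x 1 Hx ltac:(lra)). lra. }
  destruct (mono_lim0 F (- (KK * tv 0))) as [L0 [HL0 _]]; auto.
  { intros x Hx. destruct (Rle_lt_dec 1 x).
    - pose proof (Hm 1 x ltac:(lra) r). lra.
    - assert (H := RIntF_diff fI x 1 Hc Hx ltac:(lra)). change (F 1 - F x = RInt fI x 1) in H. rewrite HF1 in H.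
      assert (RInt fI x 1 <= RInt f0 x 1).
      { apply RInt_le; [lra | apply ex_RInt_pos; auto; lra |
        apply ex_RInt_pos; auto; lra | intros t Ht; destruct (fI_le t ltac:(lra)); eauto]. }
      pose proof (iiR_bound _ _ H0 Hf0 x 1 Hx ltac:(lra)). lra. }
  exists (L1 - L0). apply iiR_antideriv with F; auto.
  intros; apply RIntF_deriv; auto.
Qed.

Lemma Pinf_ii : exists L, iiR (P_inf_integrand x0 y0 nu beta) L.
Proof.
  destruct fI_ii as [L HL]. exists L. apply iiR_ext with fI; auto.
  intros r Hr. unfold fI, P_inf_integrand. rewrite tail_eq by auto. unfold KK. ring.
Qed.

Lemma diff_le n r : 0 < r ->
  Rabs (P_inf_integrand x0 y0 nu beta r - P_n_integrand x0 y0 nu beta n r) <=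
  KK * aa ^ S n / INR (fact (S n)) * (Tf vv cc r * Rpower r (- mk (S n) - 1)).
Proof.
  intros Hr. unfold P_inf_integrand, P_n_integrand. rewrite tail_eq by auto.
  set (X := y0 ^ 2 / (2 * nu ^ 2 * r)).
  assert (HX : 0 < X).
  { unfold X. apply Rdiv_lt_0_compat. apply pow_lt; lra. assert (0 < nu ^ 2) by (apply pow_lt; lra). nra. }
  set (T := Tf vv cc r). assert (HT : 0 <= T) by (apply Tf_nonneg; auto; [apply vv_pos | apply cc_pos]).
  set (S := sum_f_R0 (fun k => / INR (fact k) * (- X) ^ k) n).
  replace (y0 / (nu * sqrt (2 * PI)) * T * Rpower r (- (3 / 2)) * exp (- X) -
           T * (y0 / (nu * Rpower r (3 / 2) * sqrt (2 * PI))) * S)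
    with ((KK * T * Rpower r (- (3 / 2))) * (exp (- X) - S)).
  2:{ unfold KK. rewrite Rpower_Ropp. pose proof (Rpower_pos' r (3/2)).
      assert (0 < sqrt (2 * PI)) by (apply sqrt_lt_R0; pose proof PI_RGT_0; lra).
      field. repeat split; lra. }
  assert (HK : 0 <= KK * T * Rpower r (- (3 / 2))).
  { apply Rmult_le_pos. apply Rmult_le_pos; auto. left; apply KK_pos. left; apply Rpower_pos'. }
  rewrite Rabs_mult, (Rabs_right (KK * T * Rpower r (- (3 / 2)))) by lra.
  eapply Rle_trans. apply Rmult_le_compat_l. exact HK. apply taylor_expm. lra.
  unfold mk. rewrite Rpower_mk by auto.
  replace X with (aa * / r) by (unfold X, aa; field; split; lra).
  rewrite Rpow_mult_distr. right. unfold Rdiv. ring.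
Qed.

Lemma main_body :
  improper_integral_0_inf (P_inf_integrand x0 y0 nu beta) (P_inf x0 y0 nu beta) /\
  (forall n : nat,
     improper_integral_0_inf (P_n_integrand x0 y0 nu beta n) (P_n x0 y0 nu beta n) /\
     P_n x0 y0 nu beta n = sum_f_R0 (fun k => (-1) ^ k * b_coef x0 y0 nu beta k) n /\
     Rabs (P_inf x0 y0 nu beta - P_n x0 y0 nu beta n) <= b_coef x0 y0 nu beta (S n)) /\
  P_n x0 y0 nu beta 0 =
    2 * Gamma (1 + beta / (2 - 2 * beta)) / Gamma (1 / (2 - 2 * beta))
    * (y0 * (1 - beta) / (nu * sqrt PI * Rpower x0 (1 - beta))).
Proof.
  destruct Pinf_ii as [L HL].
  assert (EP : P_inf x0 y0 nu beta = L) by (unfold P_inf; apply Int_0_inf_eq; auto).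
  assert (EN0 : forall n, P_n x0 y0 nu beta n = sum_f_R0 (fun k => KK * (- aa) ^ k / INR (fact k) * tv k) n).
  { intros n. unfold P_n. apply Int_0_inf_eq. apply Pn_ii. }
  assert (EN : forall n, P_n x0 y0 nu beta n = sum_f_R0 (fun k => (-1) ^ k * b_coef x0 y0 nu beta k) n).
  { intros n. rewrite EN0. apply sum_eq. intros; apply coef_eq_signed. }
  split. rewrite EP. apply iiR_ii; auto.
  split.
  - intros n. split. rewrite EN0. apply iiR_ii, Pn_ii.
    split. apply EN.
    rewrite EP, EN0, <- coef_eq.
    apply (iiR_cmp _ _ _ _ _ _ HL (Pn_ii n)
      (iiR_scal (fun r => Tf vv cc r * Rpower r (- mk (S n) - 1)) _ _
        (term_ii vv cc (mk (S n)) vv_pos cc_pos (mk_pos (S n))))).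
    intros; apply diff_le; auto.
  - rewrite EN. simpl sum_f_R0. unfold b_coef.
    replace (1 / (2 * (1 - beta))) with (1 / (2 - 2 * beta)) by (field; lra).
    assert (Hg : 0 < Gamma (1 / (2 - 2 * beta))).
    { replace (1 / (2 - 2 * beta)) with vv by (unfold vv; field; lra).
      destruct (Gamma_eq vv vv_pos) as [-> H]; auto. }
    assert (Hp := Rpower_pos' x0 (1 - beta)).
    assert (HsP : 0 < sqrt PI) by (apply sqrt_lt_R0; apply PI_RGT_0).
    simpl. replace (0 + 1 + beta / (2 - 2 * beta)) with (1 + beta / (2 - 2 * beta)) by ring.
    field. repeat split; lra.
Qed.
End Main.

Theorem mainTheorem7 (x0 y0 nu beta : R)
  (hx0 : 0 < x0) (hy0 : 0 < y0) (hnu : 0 < nu)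
  (hb0 : 0 <= beta) (hb1 : beta < 1) :
  improper_integral_0_inf (P_inf_integrand x0 y0 nu beta) (P_inf x0 y0 nu beta) /\
  (forall n : nat,
     improper_integral_0_inf (P_n_integrand x0 y0 nu beta n) (P_n x0 y0 nu beta n) /\
     P_n x0 y0 nu beta n = sum_f_R0 (fun k => (-1) ^ k * b_coef x0 y0 nu beta k) n /\
     Rabs (P_inf x0 y0 nu beta - P_n x0 y0 nu beta n) <= b_coef x0 y0 nu beta (S n)) /\
  P_n x0 y0 nu beta 0 =
    2 * Gamma (1 + beta / (2 - 2 * beta)) / Gamma (1 / (2 - 2 * beta))
    * (y0 * (1 - beta) / (nu * sqrt PI * Rpower x0 (1 - beta))).
Proof. apply main_body; auto. Qed.
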